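(* In the MDP fixed-point setting below with $\delta=1$, let $\mathcal{Z}_i=\{e^1,\dots,e^M\}$ (standard basis vectors of $\mathbb{R}^M$) for every $i$ and $k_i(z_i)=-C-\sum_j z_{ij}|i-j|$ with $C>0$. Then (H4) holds. Moreover, suppose there is a state $r$ with $1\in\mathcal{D}_r$ and $c_r(w_r)<-C$ for all $w_r\in\mathcal{W}_r$. Then, starting policy iteration from $v^0=0$, every admissible choice $P^1=(w^1,z^1,\psi^1)$ in the first step satisfies $z^1_r=e^r$ and $\psi^1_r=1$, row $r$ of $A(P^1)$ is identically zero, and hence $A(P^1)$ is singular (so $v^1$ is undefined).
   Context: MDP fixed-point setting: $\rho>0$; $\mathcal{P}=\prod_i(\mathcal{W}_i\times\mathcal{Z}_i\times\mathcal{D}_i)$ with $\mathcal{D}_i$ nonempty subsets of $\{0,1\}$ and $\mathcal{W}_i,\mathcal{Z}_i$ nonempty sets of probability vectors in $\mathbb{R}^M$; $c_i:\mathcal{W}_i\to\mathbb{R}$, $k_i:\mathcal{Z}_i\to\mathbb{R}$. For $P=(w,z,\psi)$: $[L(w)]_{ij}=w_{ij}/(1+\rho)$, $[B(z)]_{ij}=z_{ij}$, $[c(w)]_i=c_i(w_i)$, $[k(z)]_i=k_i(z_i)$, $\Psi=\operatorname{diag}(\psi)$, $A(P)=(I-\Psi)(I-L(w))+\delta\Psi(I-B(z))$, $b(P)=(I-\Psi)c(w)+\delta\Psi k(z)$. Order/suprema componentwise; $\mathbb{B}x=\sup_{z}\{B(z)x+k(z)\}$. Policy iteration: given $v^0$,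 for $\ell\ge1$ choose $P^\ell$ with $-A(P^\ell)v^{\ell-1}+b(P^\ell)=\sup_P\{-A(P)v^{\ell-1}+b(P)\}$ and solve $A(P^\ell)v^\ell=b(P^\ell)$. (H4): for each solution $v$ of $\sup_P\{-A(P)v+b(P)\}=0$ and each $i$ there exist integers $0\le n(i)<m(i)$ with $[\mathbb{B}^{m(i)}v]_i<[\mathbb{B}^{n(i)}v]_i$. *)

(* Defs.v *)
(* Real numbers are modelled by an arbitrary realFieldType R
   (the statement is purely order-algebraic, so this is a generalization of R = reals). *)
From HB Require Import structures.
From mathcomp Require Import all_boot all_order all_algebra.
Set Implicit Arguments. Unset Strict Implicit. Unset Printing Implicit Defensive.
Import Order.TTheory GRing.Theory Num.Theory.
Local Open Scope ring_scope.

(* States are 'I_M.  A policy P = (w, z, psi): w, z : 'M_M whose i-th rows are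
   w_i, z_i; psi : 'I_M -> bool (false = 0, true = 1). *)

Definition prob_vec (R : realFieldType) (M : nat) (v : 'rV[R]_M) : Prop :=
  (forall j, 0 <= v 0 j) /\ \sum_(j < M) v 0 j = 1.

Definition Lmx (R : realFieldType) (M : nat) (rho : R) (w : 'M[R]_M) : 'M[R]_M :=
  (1 + rho)^-1 *: w.
Definition Bmx (R : realFieldType) (M : nat) (z : 'M[R]_M) : 'M[R]_M := z.
Definition cvec (R : realFieldType) (M : nat) (c : 'I_M -> 'rV[R]_M -> R)
  (w : 'M[R]_M) : 'cV[R]_M := \col_i c i (row i w).
Definition kvec (R : realFieldType) (M : nat) (k : 'I_M -> 'rV[R]_M -> R)
  (z : 'M[R]_M) : 'cV[R]_M := \col_i k i (row i z).
Definition Psi (R : realFieldType) (M : nat) (psi : 'I_M -> bool) : 'M[R]_M :=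
  diag_mx (\row_i ((psi i)%:R : R)).

Definition Amx (R : realFieldType) (M : nat) (rho delta : R)
  (w z : 'M[R]_M) (psi : 'I_M -> bool) : 'M[R]_M :=
  (1%:M - @Psi R M psi) *m (1%:M - Lmx rho w) + delta *: (@Psi R M psi *m (1%:M - Bmx z)).

Definition bvec (R : realFieldType) (M : nat) (delta : R)
  (c k : 'I_M -> 'rV[R]_M -> R) (w z : 'M[R]_M) (psi : 'I_M -> bool) : 'cV[R]_M :=
  (1%:M - @Psi R M psi) *m cvec c w + delta *: (@Psi R M psi *m kvec k z).

Definition admissible (R : realFieldType) (M : nat)
  (W Z : 'I_M -> 'rV[R]_M -> Prop) (D : 'I_M -> bool -> Prop)
  (w z : 'M[R]_M) (psi : 'I_M -> bool) : Prop :=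
  forall i, W i (row i w) /\ Z i (row i z) /\ D i (psi i).

Definition Fval (R : realFieldType) (M : nat) (rho delta : R)
  (c k : 'I_M -> 'rV[R]_M -> R) (w z : 'M[R]_M) (psi : 'I_M -> bool)
  (v : 'cV[R]_M) : 'cV[R]_M :=
  - (Amx rho delta w z psi *m v) + bvec delta c k w z psi.

Definition is_supR (R : realFieldType) (S : R -> Prop) (s : R) : Prop :=
  (forall x, S x -> x <= s) /\ (forall y, (forall x, S x -> x <= y) -> s <= y).

Definition solves_HJB (R : realFieldType) (M : nat) (rho delta : R)
  (W Z : 'I_M -> 'rV[R]_M -> Prop) (D : 'I_M -> bool -> Prop)
  (c k : 'I_M -> 'rV[R]_M -> R) (v : 'cV[R]_M) : Prop :=
  forall i, is_supR (fun t => exists w z psi,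
      admissible W Z D w z psi /\ t = Fval rho delta c k w z psi v i 0) 0.

Definition Bellman_step (R : realFieldType) (M : nat)
  (Z : 'I_M -> 'rV[R]_M -> Prop) (k : 'I_M -> 'rV[R]_M -> R)
  (x y : 'cV[R]_M) : Prop :=
  forall i, is_supR (fun t => exists z : 'M[R]_M,
      (forall j, Z j (row j z)) /\ t = (Bmx z *m x + kvec k z) i 0) (y i 0).

(* The iterates are
   described as sequences u with u 0 = v and u (n+1) = BB (u n). *)
Definition H4 (R : realFieldType) (M : nat) (rho delta : R)
  (W Z : 'I_M -> 'rV[R]_M -> Prop) (D : 'I_M -> bool -> Prop)
  (c k : 'I_M -> 'rV[R]_M -> R) : Prop :=
  forall v : 'cV[R]_M, solves_HJB rho delta W Z D c k v ->
    (exists u : nat -> 'cV[R]_M,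
        u 0%N = v /\ forall n, Bellman_step Z k (u n) (u n.+1)) /\
    (forall u : nat -> 'cV[R]_M, u 0%N = v ->
        (forall n, Bellman_step Z k (u n) (u n.+1)) ->
        forall i, exists n m : nat, (n < m)%N /\ u m i 0 < u n i 0).

Definition PI_choice (R : realFieldType) (M : nat) (rho delta : R)
  (W Z : 'I_M -> 'rV[R]_M -> Prop) (D : 'I_M -> bool -> Prop)
  (c k : 'I_M -> 'rV[R]_M -> R) (v : 'cV[R]_M)
  (w1 z1 : 'M[R]_M) (psi1 : 'I_M -> bool) : Prop :=
  admissible W Z D w1 z1 psi1 /\
  forall w z psi, admissible W Z D w z psi ->
    forall i, Fval rho delta c k w z psi v i 0 <= Fval rho delta c k w1 z1 psi1 v i 0.

Definition Zbasis (R : realFieldType) (M : nat) (i : 'I_M) (v : 'rV[R]_M) : Prop :=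
  exists j : 'I_M, v = delta_mx 0 j.

Definition kdist (R : realFieldType) (M : nat) (C : R) (i : 'I_M) (v : 'rV[R]_M) : R :=
  - C - \sum_(j < M) v 0 j * `|(i : nat)%:R - (j : nat)%:R : R|.

(* Main.v *)
Require Import Defs.
From HB Require Import structures.
From mathcomp Require Import all_boot all_order all_algebra.
From mathcomp Require Import ring lra.
From Stdlib Require Import ClassicalEpsilon.
Import Order.TTheory GRing.Theory Num.Theory.
Local Open Scope ring_scope.

Set Implicit Arguments.
Section S.
Variables (R : realFieldType) (M : nat) (C : R).

Definition dist (i j : 'I_M) : R := `|(i : nat)%:R - (j : nat)%:R : R|.

Lemma mul_delta_entry (z : 'M[R]_M) (x : 'cV[R]_M) i j :
  row i z = delta_mx 0 j -> (z *m x) i 0 = x j 0.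
Proof.
move=> h.
have -> : (z *m x) i 0 = row i (z *m x) 0 0 by rewrite [RHS]mxE.
by rewrite row_mul h -rowE mxE.
Qed.

Lemma kdist_delta i j : kdist C i (delta_mx 0 j) = - C - dist i j.
Proof.
rewrite /kdist (bigD1 j) //= big1 ?addr0.
  by rewrite mxE !eqxx mul1r.
by move=> l hl; rewrite mxE eqxx /= (negbTE hl) mul0r.
Qed.

Definition zconst (l : 'I_M) : 'M[R]_M := \matrix_(a, b) ((b == l)%:R).

Lemma row_zconst l a : row a (zconst l) = delta_mx 0 l.
Proof. by apply/rowP => b; rewrite !mxE. Qed.

Lemma Bset_char (x : 'cV[R]_M) i t :
  (exists z : 'M[R]_M, (forall j, Zbasis j (row j z)) /\
     t = (Bmx z *m x + kvec (kdist C) z) i 0) <->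
  exists j, t = x j 0 - C - dist i j.
Proof.
split.
  move=> [z [hz ->]]; have [j hj] := hz i; exists j.
  rewrite /Bmx mxE (mul_delta_entry _ hj) /kvec mxE hj kdist_delta; lra.
move=> [j ->]; exists (zconst j); split.
  by move=> a; exists j; rewrite row_zconst.
rewrite /Bmx mxE (mul_delta_entry _ (row_zconst j i)) /kvec mxE row_zconst kdist_delta; lra.
Qed.

Definition BBf (x : 'cV[R]_M) : 'cV[R]_M :=
  \col_i (let j := Order.arg_max i xpredT (fun j => x j 0 - C - dist i j) in x j 0 - C - dist i j).

Lemma BBf_step x : Bellman_step (@Zbasis R M) (kdist C) x (BBf x).
Proof.
move=> i; rewrite mxE.
case: (@arg_maxP _ _ _ i xpredT (fun j => x j 0 - C - dist i j) isT) => j _ hj.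
split.
  by move=> t /Bset_char [l ->]; exact: hj.
by move=> y hy; apply: hy; apply/Bset_char; exists j.
Qed.


Lemma Psi_mul_entry n (psi : 'I_M -> bool) (X : 'M[R]_(M, n)) i b :
  (Psi R psi *m X) i b = (psi i)%:R * X i b.
Proof. by rewrite /Psi mul_diag_mx !mxE. Qed.

Lemma IPsi_mul_entry (psi : 'I_M -> bool) (X : 'M[R]_(M, 1)) i b :
  ((1%:M - Psi R psi) *m X) i b = (1 - (psi i)%:R) * X i b.
Proof. by rewrite mulmxBl mul1mx /Psi mul_diag_mx !mxE; ring. Qed.

Lemma IPsi_mul_entry' (psi : 'I_M -> bool) (X : 'M[R]_M) i b :
  ((1%:M - Psi R psi) *m X) i b = (1 - (psi i)%:R) * X i b.
Proof. by rewrite mulmxBl mul1mx /Psi mul_diag_mx !mxE; ring. Qed.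

Lemma Fval0 rho c k (w z : 'M[R]_M) psi i :
  Fval rho 1 c k w z psi 0 i 0 = if psi i then k i (row i z) else c i (row i w).
Proof.
rewrite /Fval mulmx0 oppr0 add0r /bvec scale1r mxE IPsi_mul_entry Psi_mul_entry.
rewrite /cvec /kvec !mxE; case: (psi i) => /=; ring.
Qed.

Lemma Arow0 rho (w z : 'M[R]_M) psi r :
  psi r = true -> row r z = delta_mx 0 r -> row r (Amx rho 1 w z psi) = 0.
Proof.
move=> hp hz; apply/rowP => b.
rewrite mxE /Amx scale1r mxE IPsi_mul_entry' Psi_mul_entry hp /Bmx.
have := f_equal (fun v : 'rV[R]_M => v 0 b) hz; rewrite /= mxE => hzb.
move: hzb; rewrite !mxE /= eq_sym; case: (b == r) => /= hzb; lra.
Qed.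

Lemma det_row0 (A : 'M[R]_M) r : row r A = 0 -> \det A = 0.
Proof.
move=> h; rewrite (expand_det_row _ r) big1 // => j _.
have -> : A r j = row r A 0 j by rewrite mxE.
by rewrite h mxE mul0r.
Qed.

End S.
Arguments dist {R M} i j.
Arguments Bset_char {R M C x i t}.
Arguments kdist_delta {R M} C i j.

Theorem mainTheorem9 (R : realFieldType) (M : nat) (rho C : R)
  (W : 'I_M -> 'rV[R]_M -> Prop) (D : 'I_M -> bool -> Prop)
  (c : 'I_M -> 'rV[R]_M -> R) :
  0 < rho -> 0 < C ->
  (forall i, exists w, W i w) ->
  (forall i w, W i w -> prob_vec w) ->
  (forall i, exists b, D i b) ->
  H4 rho 1 W (@Zbasis R M) D c (kdist C) /\
  (forall r : 'I_M, D r true -> (forall w, W r w -> c r w < - C) ->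
    forall (w1 z1 : 'M[R]_M) (psi1 : 'I_M -> bool),
      PI_choice rho 1 W (@Zbasis R M) D c (kdist C) 0 w1 z1 psi1 ->
      [/\ row r z1 = delta_mx 0 r, psi1 r = true,
          row r (Amx rho 1 w1 z1 psi1) = 0
        & \det (Amx rho 1 w1 z1 psi1) = 0]).
Proof.
move=> hrho hC HW _ HD; split.
  move=> v _; split.
    exists (fun n => iter n (@BBf R M C) v); split => // n; exact: BBf_step.
  move=> u u0 hu i; exists 1%N, 2%N; split => //.
  have key : u 2%N i 0 <= u 1%N i 0 - C.
    have [_ lub2] := hu 1%N i; apply: lub2 => t /Bset_char [j ->].
    suff : u 1%N j 0 <= u 1%N i 0 + (@dist R M i j) by lra.
    have [_ lub1] := hu 0%N j; apply: lub1 => t' /Bset_char [l ->].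
    have [ub1 _] := hu 0%N i.
    have := ub1 (u 0%N l 0 - C - (@dist R M i l)) (proj2 Bset_char (ex_intro _ l erefl)).
    have tri : (@dist R M i l) <= (@dist R M i j) + (@dist R M j l) by rewrite /dist; exact: ler_distD.
    lra.
  lra.
move=> r hDr hc w1 z1 psi1 [adm hdom].
pose wstar : 'M[R]_M := \matrix_(i, b) (proj1_sig (constructive_indefinite_description _ (HW i))) 0 b.
pose psistar i := if i == r then true else proj1_sig (constructive_indefinite_description _ (HD i)).
have admS : admissible W (@Zbasis R M) D wstar 1%:M psistar.
  move=> i; split; [|split].
  - have -> : row i wstar = proj1_sig (constructive_indefinite_description _ (HW i)).
      by apply/rowP => b; rewrite !mxE.
    exact: proj2_sig.
  - by exists i; rewrite row1.
  - rewrite /psistar; case: eqP => [->|_] //; exact: proj2_sig.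
have := hdom _ _ _ admS r.
rewrite !Fval0 /psistar eqxx row1 kdist_delta /dist subrr normr0.
case hp: (psi1 r).
  have [j hj] := (adm r).2.1.
  rewrite hj kdist_delta => h.
  have hd : (@dist R M r j) = 0.
    have := normr_ge0 ((r : nat)%:R - (j : nat)%:R : R); rewrite /dist in h *; lra.
  move: hd; rewrite /dist => /eqP; rewrite normr_eq0 subr_eq0 eqr_nat => /eqP hrj.
  have ejr : j = r by apply: val_inj.
  have hz : row r z1 = delta_mx 0 r by rewrite hj ejr.
  have hA := @Arow0 R M rho w1 z1 psi1 r hp hz.
  split; [by rewrite ejr | by [] | exact: hA | exact: (det_row0 hA)].
have := hc _ (adm r).1; lra.
Qed.
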